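(* Let $f$ be as in the standing setting and suppose $f$ is quasi-strongly convex on $X$ with constant $\kappa_f>0$, i.e. $$f^*\ \ge\ f(x)+\langle \nabla f(x),\bar x-x\rangle+\tfrac{\kappa_f}{2}\|x-\bar x\|^2\qquad\forall x\in X .$$ Then $f$ has a quadratic under-approximation on $X$ with the same constant, i.e. $$f(x)\ \ge\ f^*+\langle \nabla f(\bar x),x-\bar x\rangle+\tfrac{\kappa_f}{2}\|x-\bar x\|^2\qquad\forall x\in X .$$
   Context: Standing setting: $X\subseteq\mathbb{R}^n$ is a nonempty closed convex set; $f:X\to\mathbb{R}$ is convex and continuously differentiable, with $L_f$-Lipschitz continuous gradient on $X$ ($\|\nabla f(x)-\nabla f(y)\|\le L_f\|x-y\|$ for all $x,y\in X$, $L_f>0$). Consider the problem $f^*=\min_{x\in X}f(x)$, whose optimal set $X^*=\arg\min_{x\in X}f(x)$ is assumed nonempty and closed and $f^*$ finite. $\|\cdot\|$ is the Euclidean norm, $[u]_S$ denotes the Euclidean projection of $u$ onto a closed convex set $S$, and for $x\in X$ we write $\bar x=[x]_{X^*}$. *)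

(* Defs.v *)
From mathcomp Require Import ssreflect ssrfun ssrbool eqtype ssrnat fintype bigop.
From Stdlib Require Import Reals.
Open Scope R_scope.

Definition vec (n : nat) := 'I_n -> R.

Definition vadd {n} (x y : vec n) : vec n := fun i => x i + y i.
Definition vsub {n} (x y : vec n) : vec n := fun i => x i - y i.
Definition vscal {n} (a : R) (x : vec n) : vec n := fun i => a * x i.

Definition inner {n} (x y : vec n) : R := \big[Rplus/0]_(i < n) (x i * y i).
Definition norm {n} (x : vec n) : R := sqrt (inner x x).

Definition convex_vset {n} (S : vec n -> Prop) : Prop :=
  forall x y t, S x -> S y -> 0 <= t <= 1 ->
    S (vadd (vscal t x) (vscal (1 - t) y)).

Definition closed_vset {n} (S : vec n -> Prop) : Prop :=
  forall x, (forall eps, 0 < eps -> exists y, S y /\ norm (vsub y x) < eps) -> S x.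

Definition nonempty_set {n} (S : vec n -> Prop) : Prop := exists x, S x.

Definition convex_on {n} (S : vec n -> Prop) (f : vec n -> R) : Prop :=
  forall x y t, S x -> S y -> 0 <= t <= 1 ->
    f (vadd (vscal t x) (vscal (1 - t) y)) <= t * f x + (1 - t) * f y.

Definition has_gradient_at {n} (f : vec n -> R) (x gx : vec n) : Prop :=
  forall eps, 0 < eps -> exists delta, 0 < delta /\
    forall y, norm (vsub y x) < delta ->
      Rabs (f y - f x - inner gx (vsub y x)) <= eps * norm (vsub y x).

Definition Lsmooth_on {n} (S : vec n -> Prop) (f : vec n -> R) (g : vec n -> vec n)
  (L : R) : Prop :=
  (forall x, S x -> has_gradient_at f x (g x)) /\
  (forall x y, S x -> S y -> norm (vsub (g x) (g y)) <= L * norm (vsub x y)).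

Definition argmin_set {n} (X : vec n -> Prop) (f : vec n -> R) : vec n -> Prop :=
  fun x => X x /\ forall y, X y -> f x <= f y.

Definition is_proj {n} (S : vec n -> Prop) (x p : vec n) : Prop :=
  S p /\ forall q, S q -> norm (vsub x p) <= norm (vsub x q).

(* Main.v *)
From HB Require Import structures.
Require Import Defs.
From mathcomp Require Import ssreflect ssrfun ssrbool eqtype ssrnat fintype bigop.
From Stdlib Require Import Reals Lra Psatz FunctionalExtensionality.
Open Scope R_scope.
HB.instance Definition _ := Monoid.isComLaw.Build R 0 Rplus (fun a b c => esym (Rplus_assoc a b c)) Rplus_comm Rplus_0_l.
Lemma sum_add {n} (F G : 'I_n -> R) :
  \big[Rplus/0]_(i < n) (F i + G i) = \big[Rplus/0]_(i < n) F i + \big[Rplus/0]_(i < n) G i.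
Proof. by rewrite big_split. Qed.
Lemma sum_scal {n} a (F : 'I_n -> R) :
  \big[Rplus/0]_(i < n) (a * F i) = a * \big[Rplus/0]_(i < n) F i.
Proof.
elim: n F => [|n IH] F; first by rewrite !big_ord0; lra.
rewrite !big_ord_recr IH; simpl; ring.
Qed.
Lemma sum_ge0 {n} (F : 'I_n -> R) : (forall i, 0 <= F i) -> 0 <= \big[Rplus/0]_(i < n) F i.
Proof.
elim: n F => [|n IH] F H; first by rewrite !big_ord0; lra.
rewrite !big_ord_recr; simpl. have := IH (fun i => F (widen_ord (leqnSn n) i)) (fun i => H _).
have h1 := H ord_max. move=> h2. apply Rplus_le_le_0_compat; [exact h2| exact h1].
Qed.

Lemma inner_sym {n} (u v : vec n) : inner u v = inner v u.
Proof. rewrite /inner; apply eq_bigr => i _; ring. Qed.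

Lemma inner_addr {n} (u v w : vec n) : inner u (vadd v w) = inner u v + inner u w.
Proof. rewrite /inner -sum_add; apply eq_bigr => i _; rewrite /vadd; ring. Qed.

Lemma inner_scalr {n} a (u v : vec n) : inner u (vscal a v) = a * inner u v.
Proof. rewrite /inner -sum_scal; apply eq_bigr => i _; rewrite /vscal; ring. Qed.

Lemma inner_ge0 {n} (u : vec n) : 0 <= inner u u.
Proof. apply sum_ge0 => i; apply Rle_0_sqr. Qed.

Lemma norm_ge0 {n} (u : vec n) : 0 <= norm u.
Proof. apply sqrt_pos. Qed.

Lemma norm_sq {n} (u : vec n) : norm u ^ 2 = inner u u.
Proof. rewrite /norm /= Rmult_1_r sqrt_sqrt //; apply inner_ge0. Qed.

Lemma sq_eq x y : 0 <= x -> 0 <= y -> x ^ 2 = y ^ 2 -> x = y.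
Proof. move=> hx hy h; apply Rle_antisym; nra. Qed.

Lemma norm_scal {n} a (u : vec n) : 0 <= a -> norm (vscal a u) = a * norm u.
Proof.
move=> ha. have h1 := norm_ge0 u. have h2 := norm_ge0 (vscal a u).
apply sq_eq => //; first by apply Rmult_le_pos.
rewrite Rpow_mult_distr !norm_sq.
rewrite inner_scalr inner_sym inner_scalr; simpl; ring.
Qed.

Lemma cs {n} (u v : vec n) : (inner u v) ^ 2 <= inner u u * inner v v.
Proof.
have key : forall l, 0 <= inner u u + 2 * l * inner u v + l ^ 2 * inner v v.
{ move=> l. have h := inner_ge0 (vadd u (vscal l v)).
  rewrite inner_addr !(inner_sym (vadd _ _)) !inner_addr !inner_scalr in h.
  rewrite !(inner_sym (vscal _ _)) !inner_scalr in h. nra. }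
have uu := inner_ge0 u. have vv := inner_ge0 v.
destruct (Req_dec (inner v v) 0) as [h0|h0].
- destruct (Req_dec (inner u v) 0) as [h1|h1]; first by rewrite h0 h1; nra.
  have := key (- (inner u u + 1) / (2 * inner u v)). rewrite h0.
  have -> : inner u u + 2 * (- (inner u u + 1) / (2 * inner u v)) * inner u v = -1.
  { field. exact h1. }
  nra.
- have := key (- inner u v / inner v v).
  have vp : 0 < inner v v by lra.
  have -> : inner u u + 2 * (- inner u v / inner v v) * inner u v +
       (- inner u v / inner v v) ^ 2 * inner v v
       = (inner u u * inner v v - inner u v ^ 2) / inner v v.
  { field. exact h0. }
  move=> h. have h2 : 0 <= (inner u u * inner v v - inner u v ^ 2) / inner v v * inner v v by nra.
  rewrite /Rdiv Rmult_assoc Rinv_l in h2; lra.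
Qed.

Lemma cs2 {n} (u v : vec n) : inner u v <= norm u * norm v.
Proof.
have h := cs u v. rewrite -!norm_sq in h.
have h1 := norm_ge0 u. have h2 := norm_ge0 v.
have hp : 0 <= norm u * norm v by apply Rmult_le_pos.
destruct (Rle_lt_dec (inner u v) (norm u * norm v)) as [|hl] => //.
have : (norm u * norm v) * (norm u * norm v) < inner u v * inner u v.
{ apply Rmult_le_0_lt_compat => //. }
simpl in h. nra.
Qed.

Lemma tri {n} (u v : vec n) : norm (vadd u v) <= norm u + norm v.
Proof.
have h : norm (vadd u v) ^ 2 <= (norm u + norm v) ^ 2.
{ rewrite norm_sq inner_addr !(inner_sym (vadd _ _)) !inner_addr (inner_sym v u).
  have h0 := cs2 u v. rewrite -!norm_sq. nra. }
have := norm_ge0 (vadd u v). have h1 := norm_ge0 u. have h2 := norm_ge0 v. nra.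
Qed.

Lemma grad_ineq {n} (X : vec n -> Prop) (f : vec n -> R) (x y gx : vec n) :
  convex_on X f -> X x -> X y -> has_gradient_at f x gx ->
  f y >= f x + inner gx (vsub y x).
Proof.
move=> Hc Hx Hy Hg.
apply Rnot_lt_ge => Hlt.
set D := f x + inner gx (vsub y x) - f y.
have hD : 0 < D by rewrite /D; lra.
set e := norm (vsub y x).
have he : 0 <= e by apply norm_ge0.
set eps := D / (2 * (e + 1)).
have heps : 0 < eps by apply Rdiv_lt_0_compat; lra.
have hepse : eps * e < D.
{ rewrite /eps. have h2 : D / (2 * (e + 1)) * e = D * (e / (2 * (e+1))) by field; lra.
  rewrite h2. have h3 : e / (2 * (e + 1)) < 1.
  { apply (Rmult_lt_reg_r (2 * (e+1))); first lra.
    rewrite /Rdiv Rmult_assoc Rinv_l; lra. }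
  nra. }
case: (Hg eps heps) => delta [hdel Hd].
set t := Rmin 1 (delta / (2 * (e + 1))).
have ht0 : 0 < t by apply Rmin_pos; [lra| apply Rdiv_lt_0_compat; lra].
have ht1 : t <= 1 by apply Rmin_l.
have hte : t * e < delta.
{ have h4 : t <= delta / (2 * (e + 1)) by apply Rmin_r.
  have h5 : t * e <= delta / (2 * (e + 1)) * e by apply Rmult_le_compat_r.
  have h6 : delta / (2 * (e + 1)) * e = delta * (e / (2 * (e+1))) by field; lra.
  have h3 : e / (2 * (e + 1)) < 1.
  { apply (Rmult_lt_reg_r (2 * (e+1))); first lra.
    rewrite /Rdiv Rmult_assoc Rinv_l; lra. }
  nra. }
set z := vadd (vscal t y) (vscal (1 - t) x).
have hz : vsub z x = vscal t (vsub y x).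
{ apply functional_extensionality => i; rewrite /z /vsub /vadd /vscal; ring. }
have hnz : norm (vsub z x) = t * e by rewrite hz norm_scal; [reflexivity| lra].
have Hcz := Hc y x t Hy Hx (conj (Rlt_le _ _ ht0) ht1).
rewrite -/z in Hcz.
have Hdz := Hd z ltac:(rewrite hnz; exact hte).
rewrite hnz hz inner_scalr in Hdz.
have Ha : - (f z - f x - t * inner gx (vsub y x)) <= eps * (t * e).
{ apply (Rle_trans _ _ _ (Rle_abs _)); rewrite Rabs_Ropp; exact Hdz. }
have hmain : t * D <= eps * (t * e) by rewrite /D; nra.
have : eps * (t * e) < t * D by nra.
lra.
Qed.

Lemma Rdiv_le_0_compat a b : 0 <= a -> 0 < b -> 0 <= a / b.
Proof. move=> ha hb; apply Rmult_le_pos; [lra | apply Rlt_le, Rinv_0_lt_compat; lra]. Qed.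

Lemma powle1 q M : 0 <= q <= 1 -> q ^ M <= 1.
Proof.
move=> hq; elim: M => [|M IH] /=; first lra.
have h := pow_le q M (proj1 hq). nra.
Qed.

Theorem theorem1 (n : nat) (X : vec n -> Prop) (f : vec n -> R)
  (g : vec n -> vec n) (Lf kappa fstar : R) :
  nonempty_set X -> closed_vset X -> convex_vset X ->
  convex_on X f -> 0 < Lf -> Lsmooth_on X f g Lf ->
  nonempty_set (argmin_set X f) -> closed_vset (argmin_set X f) ->
  (forall x, X x -> fstar <= f x) -> (exists x, X x /\ f x = fstar) ->
  0 < kappa ->
  (forall x xb, X x -> is_proj (argmin_set X f) x xb ->
     fstar >= f x + inner (g x) (vsub xb x) + kappa / 2 * (norm (vsub x xb)) ^ 2) ->
  forall x xb, X x -> is_proj (argmin_set X f) x xb ->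
    f x >= fstar + inner (g xb) (vsub x xb) + kappa / 2 * (norm (vsub x xb)) ^ 2.
Proof.
move=> _ _ HXc Hfc _ [Hgrad _] _ _ Hlow [x0 [Hx0 Hfx0]] Hk Hqsc x xb Hx Hproj.
have Hproj' := Hproj.
case: Hproj' => [[Hxb Hxbmin] Hpm].
have Hfxb : f xb = fstar.
{ have h1 := Hlow xb Hxb. have h2 := Hxbmin x0 Hx0. lra. }
set d := norm (vsub x xb).
have hd : 0 <= d by apply norm_ge0.
set c := kappa / 2 * d ^ 2.
have hc : 0 <= c by rewrite /c; have := pow2_ge_0 d; move=> h; apply Rmult_le_pos; lra.
set seg := fun s : R => vadd (vscal s x) (vscal (1 - s) xb).
have Xseg : forall s, 0 <= s <= 1 -> X (seg s) by move=> s hs; apply HXc.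
have eq1 : forall s, vsub (seg s) xb = vscal s (vsub x xb).
{ move=> s; apply functional_extensionality => i; rewrite /seg /vsub /vadd /vscal; ring. }
have eq2 : forall s, vsub xb (seg s) = vscal (- s) (vsub x xb).
{ move=> s; apply functional_extensionality => i; rewrite /seg /vsub /vadd /vscal; ring. }
have eq3 : forall s t, vsub (seg t) (seg s) = vscal (t - s) (vsub x xb).
{ move=> s t; apply functional_extensionality => i; rewrite /seg /vsub /vadd /vscal; ring. }
have eq4 : seg 1 = x.
{ apply functional_extensionality => i; rewrite /seg /vsub /vadd /vscal; ring. }
have projseg : forall s, 0 <= s <= 1 -> is_proj (argmin_set X f) (seg s) xb.
{ move=> s hs; split; first by split.
  move=> q Hq. rewrite eq1 norm_scal; last lra.
  have h1 := Hpm q Hq.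
  have e5 : vsub x q = vadd (vscal (1 - s) (vsub x xb)) (vsub (seg s) q).
  { apply functional_extensionality => i; rewrite /seg /vsub /vadd /vscal; ring. }
  have h2 := tri (vscal (1 - s) (vsub x xb)) (vsub (seg s) q).
  rewrite -e5 norm_scal in h2; last lra.
  rewrite -/d in h1 h2. rewrite -/d; nra. }
set a := fun s => inner (g (seg s)) (vsub x xb).
set a0 := inner (g xb) (vsub x xb).
set phi := fun s => f (seg s).
have Hs : forall s, 0 <= s <= 1 -> fstar >= phi s - s * a s + c * s ^ 2.
{ move=> s hs. have h := Hqsc (seg s) xb (Xseg s hs) (projseg s hs).
  rewrite eq2 inner_scalr eq1 norm_scal in h; last lra.
  rewrite /phi /a /c. rewrite -/d in h. 
  have -> : kappa / 2 * d ^ 2 * s ^ 2 = kappa / 2 * (s * d) ^ 2 by ring.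
  lra. }
have Cst : forall s t, 0 <= s <= 1 -> 0 <= t <= 1 -> phi t >= phi s + (t - s) * a s.
{ move=> s t hs ht. have h := grad_ineq _ _ _ _ _ Hfc (Xseg s hs) (Xseg t ht) (Hgrad _ (Xseg s hs)).
  rewrite eq3 inner_scalr in h. exact h. }
have C0 : forall t, 0 <= t <= 1 -> phi t >= fstar + t * a0.
{ move=> t ht. have h := grad_ineq _ _ _ _ _ Hfc Hxb (Xseg t ht) (Hgrad _ Hxb).
  rewrite eq1 inner_scalr Hfxb in h. exact h. }
set u := fun s => (phi s - fstar) / s - a0.
have u0 : forall s, 0 < s <= 1 -> 0 <= u s.
{ move=> s hs. have h := C0 s ltac:(lra). rewrite /u.
  have -> : (phi s - fstar) / s - a0 = (phi s - fstar - s * a0) / s by field; lra.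
  apply Rdiv_le_0_compat; lra. }
have step : forall s t, 0 < s -> s < t -> t <= 1 -> u t >= u s + c * s * (t - s) / t.
{ move=> s t hs hst ht1.
  have h1 := Hs s ltac:(lra). have h2 := Cst s t ltac:(lra) ltac:(lra).
  set A := phi s - fstar. set B := phi t - fstar.
  have k1 : s * B >= t * A + c * s ^ 2 * (t - s).
  { rewrite /A /B. have h3 : (t - s) * (s * a s) >= (t - s) * (phi s - fstar + c * s ^ 2).
    { apply Rle_ge, Rmult_le_compat_l; lra. }
    nra. }
  rewrite /u -/A -/B.
  have -> : B / t - a0 = (s * B) / (s * t) - a0 by field; lra.
  have -> : A / s - a0 + c * s * (t - s) / t = (t * A + c * s ^ 2 * (t - s)) / (s * t) - a0
    by field; lra.
  apply Rle_ge. apply Rplus_le_compat_r. apply Rmult_le_compat_r.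
  - apply Rlt_le, Rinv_0_lt_compat, Rmult_lt_0_compat; lra.
  - lra. }
have iter : forall q, 0 < q < 1 -> forall M : nat, u 1 >= u (q ^ M) + c * q * (1 - q ^ M).
{ move=> q hq. elim => [|M IH].
  - simpl. lra.
  - have hqM : 0 < q ^ M by apply pow_lt; lra.
    have hqM1 : q ^ M <= 1 by apply powle1; lra.
    have hs1 : 0 < q * q ^ M by apply Rmult_lt_0_compat; lra.
    have hs2 : q * q ^ M < q ^ M by nra.
    have h := step (q * q ^ M) (q ^ M) hs1 hs2 hqM1.
    have ee : c * (q * q ^ M) * (q ^ M - q * q ^ M) / q ^ M = c * q * q ^ M * (1 - q)
      by field; lra.
    rewrite ee in h.
    simpl. nra. }
have Hu1 : u 1 = f x - fstar - a0 by rewrite /u /phi eq4; field.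
apply Rnot_lt_ge => Hlt.
have hlt : u 1 < c by rewrite Hu1; rewrite /c /d in Hlt |- *; lra.
have hu1 : 0 <= u 1 by apply u0; lra.
have hcp : 0 < c by lra.
set q := (u 1 / c + 1) / 2.
have hr : u 1 / c < 1.
{ apply (Rmult_lt_reg_r c) => //. rewrite /Rdiv Rmult_assoc Rinv_l; lra. }
have hr0 : 0 <= u 1 / c by apply Rdiv_le_0_compat.
have hq : 0 < q < 1 by rewrite /q; lra.
have hcq : c * q = (u 1 + c) / 2 by rewrite /q; field; lra.
set y := 1 - u 1 / (c * q).
have hy : 0 < y.
{ rewrite /y hcq. have : u 1 / ((u 1 + c) / 2) < 1.
  { apply (Rmult_lt_reg_r ((u 1 + c) / 2)); first lra.
    rewrite /Rdiv Rmult_assoc Rinv_l; lra. }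
  lra. }
have hq' : Rabs q < 1 by rewrite Rabs_right; lra.
case: (pow_lt_1_zero q hq' y hy) => N HN.
have hN := HN N (Nat.le_refl N).
have hqN : 0 < q ^ N by apply pow_lt; lra.
rewrite Rabs_right in hN; last lra.
have hit := iter q hq N.
have hN0 := u0 (q ^ N) (conj hqN (powle1 q N ltac:(lra))).
have hcqp : 0 < c * q by nra.
have e : c * q * y = c * q - u 1 by rewrite /y; field; lra.
nra.
Qed.
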